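(* Let $\Omega\subset\mathbb{R}^d$ be a bounded open set, $q\ge0$ an integer, $\lambda\in\mathbb{R}\setminus\{0\}$, $k\in C^q(\overline{\Omega}\times\overline{\Omega})$, $f\in C^q(\overline{\Omega})$. Let $X=\{x_1,\dots,x_n\}\subset\overline{\Omega}$ and $Y=\{y_1,\dots,y_m\}\subset\overline{\Omega}$ be finite sets, $\vec w\in\mathbb{R}^m$, and $R$ a real $m\times n$ matrix. Define $\mathcal{K}_{\vec h}\colon C^q(\overline{\Omega})\to C^q(\overline{\Omega})$ by $(\mathcal{K}_{\vec h}v)(x)=\sum_{i=1}^m w_i k(x,y_i)\sum_{j=1}^n R_{ij}v(x_j)$. Then the linear system $(\lambda I-KWR)\hat{\vec u}=f|_X$ has solutions if and only if the operator equation $(\lambda\mathcal{I}-\mathcal{K}_{\vec h})u_{\vec h}=f$ has solutions $u_{\vec h}\in C^q(\overline{\Omega})$. Moreover, if the two solution sets are nonempty, they are affine spaces of the same dimension.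
   Context: $C^q(\overline{\Omega})$ denotes functions whose partial derivatives up to order $q$ exist on $\Omega$ and extend continuously to $\overline{\Omega}$. $I$ is the $n\times n$ identity, $\mathcal{I}$ the identity operator, $K$ is the $n\times m$ matrix $K_{ij}=k(x_i,y_j)$, $W=\mathrm{diag}(\vec w)$, and $f|_X=(f(x_1),\dots,f(x_n))^T$. *)

(* Defs.v *)
From HB Require Import structures.
From mathcomp Require Import all_boot all_order all_algebra.
From mathcomp Require Import all_classical all_reals all_analysis.
Set Implicit Arguments. Unset Strict Implicit. Unset Printing Implicit Defensive.
Import Order.TTheory GRing.Theory Num.Theory.
Import numFieldNormedType.Exports.
Local Open Scope classical_set_scope.
Local Open Scope ring_scope.

Definition evec (R : realType) (d : nat) (i : 'I_d) : 'rV[R]_d := delta_mx 0 i.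

Fixpoint dpart (R : realType) (d : nat) (s : seq 'I_d) (f : 'rV[R]_d -> R)
  : 'rV[R]_d -> R :=
  match s with
  | [::] => f
  | i :: s' => fun x => derive (dpart s' f) x (evec R i)
  end.

(* C^q(closure O), O open: all (iterated) partial derivatives up to order q
   exist on O and extend continuously to closure O; in particular f itself is
   continuous on closure O.  Functions are total on R^d, only their values on
   closure O matter. *)
Definition Cq_on (R : realType) (d : nat) (O : set 'rV[R]_d) (q : nat)
  (f : 'rV[R]_d -> R) : Prop :=
  [/\ {within closure O, continuous f},
      (forall (s : seq 'I_d) (i : 'I_d), (size s < q)%N ->
          forall x, O x -> derivable (dpart s f) x (evec R i))
    & (forall s : seq 'I_d, (size s <= q)%N ->
          exists g : 'rV[R]_d -> R,
            {within closure O, continuous g} /\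
            (forall x, O x -> g x = dpart s f x))].

(* S (a set of real functions on T, identified when equal on A) is an affine
   space of (finite) dimension r in the space of real functions on A. *)
Definition affine_dim_on (T : Type) (R : realType) (A : set T)
  (S : set (T -> R)) (r : nat) : Prop :=
  exists (u0 : T -> R) (b : 'I_r -> T -> R),
    (forall c : 'I_r -> R,
        (forall t, A t -> \sum_(i < r) c i * b i t = 0) -> forall i, c i = 0) /\
    (forall v : T -> R,
        S v <-> exists c : 'I_r -> R,
                 forall t, A t -> v t = u0 t + \sum_(i < r) c i * b i t).

Definition prodset (R : realType) (d : nat) (O : set 'rV[R]_d) : set 'rV[R]_(d + d) :=
  [set z | O (lsubmx z) /\ O (rsubmx z)].

Definition kmat (R : realType) (d n m : nat) (k : 'rV[R]_d -> 'rV[R]_d -> R)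
  (x : 'I_n -> 'rV[R]_d) (y : 'I_m -> 'rV[R]_d) : 'M[R]_(n, m) :=
  \matrix_(i, j) k (x i) (y j).

Definition Kh (R : realType) (d n m : nat) (k : 'rV[R]_d -> 'rV[R]_d -> R)
  (x : 'I_n -> 'rV[R]_d) (y : 'I_m -> 'rV[R]_d) (w : 'I_m -> R)
  (Rm : 'M[R]_(m, n)) (v : 'rV[R]_d -> R) : 'rV[R]_d -> R :=
  fun z => \sum_(i < m) w i * k z (y i) * \sum_(j < n) Rm i j * v (x j).

(* Main.v *)
Require Import Defs.
From HB Require Import structures.
From mathcomp Require Import all_boot all_order all_algebra.
From mathcomp Require Import all_classical all_reals all_analysis.
Import Order.TTheory GRing.Theory Num.Theory.
Import numFieldNormedType.Exports.
Local Open Scope classical_set_scope.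
Local Open Scope ring_scope.
From mathcomp Require Import ring lra.

Set Implicit Arguments. Unset Strict Implicit.
Section S.
Variable R : realType.

Lemma open_near n (O : set 'rV[R]_n) z : open O -> O z -> \forall t \near z, O t.
Proof. move=> Oo Oz. exact: (Oo z Oz). Qed.

Lemma cwP n (A : set 'rV[R]_n) (f : 'rV[R]_n -> R) :
  {within A, continuous f} -> forall x, A x -> forall e, 0 < e ->
  exists2 dl, 0 < dl & forall y, A y -> ball x dl y -> `|f x - f y| < e.
Proof.
move=> cf x Ax e e0.
have := (subspace_continuousP A f).1 cf x Ax.
move/cvgrPdist_lt => /(_ e e0).
rewrite /within /= => /nbhs_ballP [dl dl0 H].
by exists dl => // y Ay bxy; apply: H.
Qed.

Lemma cwP' n (A : set 'rV[R]_n) (f : 'rV[R]_n -> R) :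
  (forall x, A x -> forall e, 0 < e ->
  exists2 dl, 0 < dl & forall y, A y -> ball x dl y -> `|f x - f y| < e) ->
  {within A, continuous f}.
Proof.
move=> H; apply/subspace_continuousP => x Ax.
apply/cvgrPdist_lt => e e0.
have [dl dl0 Hd] := H x Ax e e0.
rewrite /within /=; apply/nbhs_ballP; exists dl => // y bxy Ay.
exact: Hd.
Qed.

Lemma closure_ballP n (A : set 'rV[R]_n) x :
  closure A x <-> forall e, 0 < e -> exists y, A y /\ ball x e y.
Proof.
split.
  move=> cx e e0; have [y [Ay bxy]] := cx _ (@nbhsx_ballx _ _ x e e0).
  by exists y.
move=> H B /nbhs_ballP [e e0 eB].
have [y [Ay bxy]] := H e e0; exists y; split => //; exact: eB.
Qed.


Lemma ball_row n (a a' b b' : 'rV[R]_n) e :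
  ball a e a' -> ball b e b' -> ball (row_mx a b) e (row_mx a' b').
Proof.
move=> [e0 Ha] [_ Hb]; split => // i j.
rewrite -(splitK j); case: (fintype.split j) => k /=.
  by rewrite !row_mxEl; apply: Ha.
by rewrite !row_mxEr; apply: Hb.
Qed.

Lemma prod_closure n (O : set 'rV[R]_n) a b :
  closure O a -> closure O b -> closure (prodset O) (row_mx a b).
Proof.
move=> /closure_ballP Ca /closure_ballP Cb; apply/closure_ballP => e e0.
have [a' [Oa' ba]] := Ca e e0; have [b' [Ob' bb]] := Cb e e0.
exists (row_mx a' b'); split; last exact: ball_row.
by rewrite /prodset /= row_mxKl row_mxKr.
Qed.

Lemma slice_cont n (O : set 'rV[R]_n) (G : 'rV[R]_(n + n) -> R) y :
  {within closure (prodset O), continuous G} -> closure O y ->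
  {within closure O, continuous (fun a => G (row_mx a y))}.
Proof.
move=> cG Cy; apply: cwP' => a Ca e e0.
have [dl dl0 H] := cwP cG (prod_closure Ca Cy) e0.
exists dl => // a' Ca' baa'; apply: H; first exact: prod_closure.
by apply: ball_row => //; apply: ballxx.
Qed.

Lemma cont_agree n (A : set 'rV[R]_n) (f g : 'rV[R]_n -> R) :
  {within closure A, continuous f} -> {within closure A, continuous g} ->
  (forall x, A x -> f x = g x) -> forall x, closure A x -> f x = g x.
Proof.
move=> cf cg Afg x Cx; case: (eqVneq (f x) (g x)) => // neq.
have e0 : 0 < `|f x - g x| / 2 by rewrite divr_gt0 // normr_gt0 subr_eq0.
have [d1 d10 H1] := cwP cf Cx e0; have [d2 d20 H2] := cwP cg Cx e0.
have /closure_ballP := Cx => /(_ (Num.min d1 d2)); rewrite lt_min d10 d20 => /(_ isT).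
move=> [x' [Ax' bx]].
have b1 : ball x d1 x' by apply: le_ball bx; rewrite ge_min lexx.
have b2 : ball x d2 x' by apply: le_ball bx; rewrite ge_min lexx orbT.
have := H1 _ (subset_closure Ax') b1; have := H2 _ (subset_closure Ax') b2.
rewrite -(Afg _ Ax') => h2 h1.
have : `|f x - g x| < `|f x - g x| / 2 + `|f x - g x| / 2.
  rewrite [X in X < _](_ : _ = `|(f x - f x') - (g x - f x')|); last by congr `|_|; ring.
  exact: le_lt_trans (ler_normB _ _) (ltrD h1 h2).
by rewrite -splitr ltxx.
Qed.

Lemma line_deriv N (F : 'rV[R]_N -> R) (p v : 'rV[R]_N) t0 :
  derivable F (t0 *: v + p) v ->
  is_derive t0 1 (fun t : R => F (t *: v + p)) (derive F (t0 *: v + p) v).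
Proof.
have E : (fun h : R => h^-1 *: (((fun t : R => F (t *: v + p)) \o shift t0) (h *: 1) - F (t0 *: v + p)))
  = (fun h : R => h^-1 *: ((F \o shift (t0 *: v + p)) (h *: v) - F (t0 *: v + p))).
  apply: funext => h /=; congr (_ *: (F _ - _)).
  by rewrite -[h%:A]/(h * 1) mulr1 scalerDl addrA.
move=> dF; split; rewrite /derivable /derive E //.
Qed.

Lemma mvt_part N (F F' : 'rV[R]_N -> R) (p v : 'rV[R]_N) L eps h :
  (forall t, `|t| <= `|h| -> derivable F (t *: v + p) v /\
     derive F (t *: v + p) v = F' (t *: v + p) /\ `|F' (t *: v + p) - L| <= eps) ->
  `|F (h *: v + p) - F p - h * L| <= eps * `|h|.
Proof.
move=> H.
pose psi := fun t : R => F (t *: v + p).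
pose df := fun t : R => F' (t *: v + p).
have Hd : forall t : R, `|t| <= `|h| -> is_derive t (1:R) psi (df t).
  move=> t /H [d1 [d2 _]]; rewrite /df -d2; exact: line_deriv.
have Fp : F p = psi 0 by rewrite /psi scale0r add0r.
have Hc : forall a b : R, `|a| <= `|h| -> `|b| <= `|h| -> a <= b ->
   {within `[a, b], continuous psi}.
  move=> a b ha hb ab; apply: derivable_within_continuous => t; rewrite in_itv /= => /andP[ta tb].
  have : `|t| <= `|h|.
    rewrite ler_norml; move: ha hb; rewrite !ler_norml => /andP[? ?] /andP[? ?].
    apply/andP; split; lra.
  by move/Hd => [].
have Hb : forall c, `|c| <= `|h| -> `|df c * h - h * L| <= eps * `|h|.
  move=> c /H [_ [_ hc]].
  have -> : df c * h - h * L = (df c - L) * h by ring.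
  by rewrite normrM ler_wpM2r.
have Hx : forall a b x : R, `|a| <= `|h| -> `|b| <= `|h| ->
    x \in `[a, b] -> `|x| <= `|h|.
  move=> a b x; rewrite in_itv /= !ler_norml => /andP[? ?] /andP[? ?] /andP[? ?].
  apply/andP; split; lra.
have Hx' : forall a b x : R, `|a| <= `|h| -> `|b| <= `|h| ->
    x \in `]a, b[ -> `|x| <= `|h|.
  move=> a b x ha hb; rewrite in_itv /= => /andP[? ?]; apply: (Hx a b) => //.
  by rewrite in_itv /=; apply/andP; split; apply: ltW.
have h00 : `|0 : R| <= `|h| by rewrite normr0.
case: (leP 0 h) => h0.
  have [c ci E] := MVT_segment h0 (fun x xi => Hd x (Hx' 0 h x h00 (lexx _) xi))
    (Hc 0 h h00 (lexx _) h0).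
  rewrite Fp -[F (h *: v + p)]/(psi h) E subr0; apply: Hb.
  exact: (Hx 0 h).
have h0' : h <= 0 by apply: ltW.
have [c ci E] := MVT_segment h0' (fun x xi => Hd x (Hx' h 0 x (lexx _) h00 xi))
    (Hc h 0 (lexx _) h00 h0').
have -> : F (h *: v + p) - F p - h * L = df c * h - h * L.
  rewrite Fp -[F (h *: v + p)]/(psi h).
  have -> : psi h - psi 0 = - (psi 0 - psi h) by ring.
  rewrite E; ring.
apply: Hb; exact: (Hx h 0).
Qed.
Lemma evec_lshift n (i : 'I_n) : evec R (lshift n i) = row_mx (evec R i) 0.
Proof.
apply/matrixP => a b; rewrite -(splitK b); case: (fintype.split b) => k /=.
  by rewrite row_mxEl !mxE (inj_eq (@lshift_inj _ _)).
by rewrite row_mxEr !mxE eq_rlshift andbF.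
Qed.

Lemma row_evec n (i : 'I_n) (t : R) z y :
  row_mx (t *: evec R i + z) y = t *: evec R (lshift n i) + row_mx z y.
Proof. by rewrite evec_lshift scale_row_mx scaler0 add_row_mx add0r. Qed.

Lemma ball_evec n (i : 'I_n) (t : R) (z : 'rV[R]_n) dl :
  `|t| < dl -> ball z dl (t *: evec R i + z).
Proof.
move=> td; split; first exact: le_lt_trans (normr_ge0 _) td.
move=> a j; rewrite /ball /= !mxE.
have -> : z a j - (t * ((a == 0) && (j == i))%:R + z a j) = - (t * ((a == 0) && (j == i))%:R) by ring.
rewrite normrN normrM; case: (_ && _); rewrite ?normr1 ?mulr1 ?normr0 ?mulr0 //.
exact: le_lt_trans (normr_ge0 _) td.
Qed.
Lemma slice_deriv n (O : set 'rV[R]_n) (G G' H : 'rV[R]_(n + n) -> R) (i : 'I_n) y z :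
  open O -> closure O y -> O z ->
  (forall p, prodset O p -> G p = H p) ->
  (forall p, prodset O p -> derivable H p (evec R (lshift n i))) ->
  (forall p, prodset O p -> derive H p (evec R (lshift n i)) = G' p) ->
  {within closure (prodset O), continuous G} ->
  {within closure (prodset O), continuous G'} ->
  is_derive z (evec R i) (fun a => G (row_mx a y)) (G' (row_mx z y)).
Proof.
move=> Oo Cy Oz GH Hd HD cG cG'.
set L := G' (row_mx z y).
have Cz : closure (prodset O) (row_mx z y) := prod_closure (subset_closure Oz) Cy.
have K1 : forall eps, 0 < eps -> exists2 dl, 0 < dl & forall h : R, `|h| < dl ->
   `|G (row_mx (h *: evec R i + z) y) - G (row_mx z y) - h * L| <= eps * `|h|.
  move=> eps eps0.
  have [d1 d10 H1] := cwP cG' Cz eps0.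
  have [d2 d20 H2] := (nbhs_ballP _ _).1 (open_near Oo Oz).
  exists (Num.min d1 d2); first by rewrite lt_min d10 d20.
  move=> h; rewrite lt_min => /andP[hd1 hd2].
  have Oa1 : O (h *: evec R i + z) by apply: H2; apply: ball_evec.
  have Cq1 : closure (prodset O) (row_mx (h *: evec R i + z) y) :=
    prod_closure (subset_closure Oa1) Cy.
  apply/ler_addgt0Pr => eta eta0.
  have eta2 : 0 < eta / 2 by rewrite divr_gt0.
  have [r1 r10 R1] := cwP cG Cq1 eta2.
  have [r0 r00 R0] := cwP cG Cz eta2.
  have /closure_ballP /(_ (Num.min d1 (Num.min r0 r1))) := Cy.
  rewrite !lt_min d10 r00 r10 => /(_ isT) [y' [Oy' byy']].
  have by1 : ball y d1 y' by apply: le_ball byy'; rewrite ge_min lexx.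
  have by0 : ball y r0 y' by apply: le_ball byy'; rewrite !ge_min lexx orbT.
  have by2 : ball y r1 y' by apply: le_ball byy'; rewrite !ge_min lexx !orbT.
  have P1 : prodset O (row_mx (h *: evec R i + z) y') by rewrite /prodset /= row_mxKl row_mxKr.
  have P0 : prodset O (row_mx z y') by rewrite /prodset /= row_mxKl row_mxKr.
  have e1 := R1 _ (subset_closure P1) (ball_row (ballxx _ r10) by2).
  have e0 := R0 _ (subset_closure P0) (ball_row (ballxx _ r00) by0).
  have M : `|H (row_mx (h *: evec R i + z) y') - H (row_mx z y') - h * L| <= eps * `|h|.
    rewrite row_evec.
    apply: (mvt_part (F' := G')) => t th.
    rewrite -row_evec.
    have tl : `|t| < d2 by exact: le_lt_trans th hd2.
    have tl1 : `|t| < d1 by exact: le_lt_trans th hd1.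
    have Ot : O (t *: evec R i + z) by apply: H2; apply: ball_evec.
    have Pt : prodset O (row_mx (t *: evec R i + z) y') by rewrite /prodset /= row_mxKl row_mxKr.
    rewrite row_evec in Pt *.
    split; first exact: Hd.
    split; first exact: HD.
    rewrite distrC; apply: ltW; apply: H1; first exact: subset_closure.
    rewrite -row_evec; apply: ball_row => //; exact: ball_evec.
  rewrite -!GH // in M.
  have -> : G (row_mx (h *: evec R i + z) y) - G (row_mx z y) - h * L =
    (G (row_mx (h *: evec R i + z) y) - G (row_mx (h *: evec R i + z) y'))
    + (G (row_mx (h *: evec R i + z) y') - G (row_mx z y') - h * L)
    - (G (row_mx z y) - G (row_mx z y')) by ring.
  apply: le_trans (ler_normB _ _) _; apply: le_trans (lerD (ler_normD _ _) (lexx _)) _.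
  have := ltW e1; have := ltW e0; move: M; lra.
have cv : (fun h : R => h^-1 *: (((fun a => G (row_mx a y)) \o shift z) (h *: evec R i)
     - G (row_mx z y))) @ 0^' --> L.
  apply/cvgrPdist_le => eps eps0.
  have [dl dl0 Hdl] := K1 eps eps0.
  rewrite near_withinE; apply/nbhs_ballP; exists dl => // h /= bh hn0.
  have hl : `|h| < dl by move: bh; rewrite /ball /= sub0r normrN.
  have := Hdl h hl.
  set D := G (row_mx (h *: evec R i + z) y) - G (row_mx z y) => HD'.
  have -> : L - h^-1 *: D = - (h^-1 * (D - h * L)).
    rewrite -[h^-1 *: D]/(h^-1 * D); field; exact: hn0.
  rewrite normrN normrM normfV ler_pdivrMl ?normr_gt0 // [`|h| * _]mulrC; exact: HD'.
split; first exact: cvgP cv.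
exact: cvg_lim cv.
Qed.
Lemma dpart_local n (O : set 'rV[R]_n) (f g : 'rV[R]_n -> R) :
  open O -> (forall x, O x -> f x = g x) ->
  forall s x, O x -> dpart s f x = dpart s g x.
Proof.
move=> Oo fg; elim => [|j s IH] x Ox /=; first exact: fg.
apply: near_eq_derive; apply: filterS (open_near Oo Ox) => t Ot; exact: IH.
Qed.

Lemma Cq_ext n (O : set 'rV[R]_n) q (f g : 'rV[R]_n -> R) :
  open O -> (forall x, closure O x -> f x = g x) -> Cq_on O q f -> Cq_on O q g.
Proof.
move=> Oo fg [cf df gf].
have fgO : forall x, O x -> f x = g x by move=> x /subset_closure; exact: fg.
split.
- apply: (subspace_eq_continuous _ cf) => x; rewrite inE; exact: fg.
- move=> s i sq x Ox; apply: near_eq_derivable (df s i sq x Ox).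
  apply: filterS (open_near Oo Ox) => t Ot; exact: (dpart_local Oo fgO).
- move=> s sq; have [h [ch eh]] := gf s sq; exists h; split => // x Ox.
  by rewrite eh // (dpart_local Oo fgO).
Qed.

Lemma Cq_add n (O : set 'rV[R]_n) q (f g : 'rV[R]_n -> R) :
  open O -> Cq_on O q f -> Cq_on O q g -> Cq_on O q (fun z => f z + g z).
Proof.
move=> Oo [cf df gf] [cg dg gg].
have key : forall s, (size s <= q)%N -> forall x, O x ->
    dpart s (fun z => f z + g z) x = dpart s f x + dpart s g x.
  elim => [|j s IH] sq x Ox //=.
  rewrite (near_eq_derive (g := dpart s f + dpart s g)); last first.
    apply: filterS (open_near Oo Ox) => t Ot; exact: IH (ltnW sq) t Ot.
  by rewrite deriveD //; [exact: df | exact: dg].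
split.
- exact: within_continuousD.
- move=> s i sq x Ox.
  apply: (near_eq_derivable (f := dpart s f + dpart s g)).
    apply: filterS (open_near Oo Ox) => t Ot; symmetry; exact: key (ltnW sq) t Ot.
  by apply: derivableD; [exact: df | exact: dg].
- move=> s sq; have [h1 [c1 e1]] := gf s sq; have [h2 [c2 e2]] := gg s sq.
  exists (h1 + h2); split; first exact: within_continuousD.
  by move=> x Ox; rewrite key // -e1 // -e2.
Qed.

Lemma Cq_scale n (O : set 'rV[R]_n) q (c : R) (f : 'rV[R]_n -> R) :
  open O -> Cq_on O q f -> Cq_on O q (fun z => c * f z).
Proof.
move=> Oo [cf df gf].
have cZ : forall h : 'rV[R]_n -> R, {within closure O, continuous h} ->
    {within closure O, continuous (fun z => c * h z)}.
  move=> h ch x; apply: cvgM; [exact: cvg_cst | exact: ch].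
have key : forall s, (size s <= q)%N -> forall x, O x ->
    dpart s (fun z => c * f z) x = c * dpart s f x.
  elim => [|j s IH] sq x Ox //=.
  rewrite (near_eq_derive (g := c \*: dpart s f)); last first.
    apply: filterS (open_near Oo Ox) => t Ot; exact: IH (ltnW sq) t Ot.
  by rewrite deriveZ //; exact: df.
split.
- exact: cZ.
- move=> s i sq x Ox.
  apply: (near_eq_derivable (f := c \*: dpart s f)).
    apply: filterS (open_near Oo Ox) => t Ot; symmetry; exact: key (ltnW sq) t Ot.
  by apply: derivableZ; exact: df.
- move=> s sq; have [h1 [c1 e1]] := gf s sq.
  exists (fun z => c * h1 z); split; first exact: cZ.
  by move=> x Ox; rewrite key // e1.
Qed.

Lemma Cq_zero n (O : set 'rV[R]_n) q : Cq_on O q (fun _ => 0).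
Proof.
have dz : forall s, dpart s (fun _ : 'rV[R]_n => 0 : R) = fun _ => 0.
  elim => [|j s IH] //=; apply: funext => x; rewrite IH; exact: derive_cst.
split.
- apply: continuous_subspaceT; exact: cst_continuous.
- by move=> s i _ x _; rewrite dz; exact: derivable_cst.
- move=> s _; exists (fun _ => 0); split; last by move=> x _; rewrite dz.
  apply: continuous_subspaceT; exact: cst_continuous.
Qed.

Lemma Cq_sum n (O : set 'rV[R]_n) q (I : Type) (r : seq I) (F : I -> 'rV[R]_n -> R) :
  open O -> (forall i, Cq_on O q (F i)) ->
  Cq_on O q (fun z => \sum_(i <- r) F i z).
Proof.
move=> Oo HF; elim: r => [|a r IH].
  by apply: (Cq_ext Oo _ (Cq_zero O q)) => x _; rewrite big_nil.
apply: (Cq_ext Oo _ (Cq_add Oo (HF a) IH)) => x _; by rewrite big_cons.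
Qed.
Lemma Cq_slice n (O : set 'rV[R]_n) q (k : 'rV[R]_n -> 'rV[R]_n -> R) y :
  open O -> Cq_on (prodset O) q (fun z => k (lsubmx z) (rsubmx z)) -> closure O y ->
  Cq_on O q (fun a => k a y).
Proof.
move=> Oo [cK dK gK] Cy.
set K := fun z : 'rV[R]_(n + n) => k (lsubmx z) (rsubmx z).
have claim : forall s, (size s <= q)%N -> forall g : 'rV[R]_(n + n) -> R,
    {within closure (prodset O), continuous g} ->
    (forall p, prodset O p -> g p = dpart (map (lshift n) s) K p) ->
    forall a, O a -> dpart s (fun a => k a y) a = g (row_mx a y).
  elim => [|j s IH] sq g cg eg a Oa /=.
    have := cont_agree cK cg (fun p Pp => esym (eg p Pp))
      (prod_closure (subset_closure Oa) Cy).
    by rewrite /K row_mxKl row_mxKr.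
  have sq' : (size (map (lshift n) s) <= q)%N by rewrite size_map ltnW.
  have [g0 [cg0 eg0]] := gK _ sq'.
  have IHs := IH (ltnW sq) g0 cg0 eg0.
  rewrite (near_eq_derive (g := fun b => g0 (row_mx b y))); last first.
    apply: filterS (open_near Oo Oa) => t Ot; exact: IHs.
  have sq'' : (size (map (lshift n) s) < q)%N by rewrite size_map.
  have := slice_deriv (G := g0) (G' := g) (H := dpart (map (lshift n) s) K) (i := j)
    Oo Cy Oa eg0 (fun p Pp => dK _ (lshift n j) sq'' p Pp)
    (fun p Pp => esym (eg p Pp)) cg0 cg.
  by case.
split.
- have := slice_cont cK Cy; apply: subspace_eq_continuous => x _.
  by rewrite /from_subspace /= row_mxKl row_mxKr.
- move=> s i sq a Oa.
  have sq' : (size (map (lshift n) s) <= q)%N by rewrite size_map ltnW.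
  have sq1 : (size (lshift n i :: map (lshift n) s) <= q)%N by rewrite /= size_map.
  have [g0 [cg0 eg0]] := gK _ sq'.
  have [g1 [cg1 eg1]] := gK _ sq1.
  apply: (near_eq_derivable (f := fun b => g0 (row_mx b y))).
    apply: filterS (open_near Oo Oa) => t Ot; symmetry; exact: (claim s (ltnW sq) g0 cg0 eg0 t Ot).
  have sq'' : (size (map (lshift n) s) < q)%N by rewrite size_map.
  have := slice_deriv (G := g0) (G' := g1) (H := dpart (map (lshift n) s) K) (i := i)
    Oo Cy Oa eg0 (fun p Pp => dK _ (lshift n i) sq'' p Pp)
    (fun p Pp => esym (eg1 p Pp)) cg0 cg1.
  by case.
- move=> s sq.
  have sq' : (size (map (lshift n) s) <= q)%N by rewrite size_map.
  have [g0 [cg0 eg0]] := gK _ sq'.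
  exists (fun a => g0 (row_mx a y)); split; first exact: slice_cont.
  by move=> a Oa; rewrite (claim s sq g0 cg0 eg0 a Oa).
Qed.
End S.

Section Alg.
Variables (R : realType) (d n m : nat) (k : 'rV[R]_d -> 'rV[R]_d -> R)
  (x : 'I_n -> 'rV[R]_d) (y : 'I_m -> 'rV[R]_d) (w : 'I_m -> R)
  (Rm : 'M[R]_(m, n)) (lam : R).

Definition KV (v : 'I_n -> R) (z : 'rV[R]_d) : R :=
  \sum_(l < m) w l * k z (y l) * \sum_(j < n) Rm l j * v j.

Definition Mmat := lam%:M - kmat k x y *m diag_mx (\row_i w i) *m Rm.

Lemma KVE v z : KV v z = \sum_(j < n) (\sum_(l < m) w l * k z (y l) * Rm l j) * v j.
Proof.
rewrite /KV; under eq_bigr do rewrite mulr_sumr.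
rewrite exchange_big; apply: eq_bigr => j _; rewrite mulr_suml.
by apply: eq_bigr => l _; rewrite mulrA.
Qed.

Lemma KV_add (a b : 'I_n -> R) z : KV (fun j => a j + b j) z = KV a z + KV b z.
Proof.
rewrite !KVE -big_split; apply: eq_bigr => j _ /=; by rewrite mulrDr.
Qed.

Lemma KV_sub (a b : 'I_n -> R) z : KV (fun j => a j - b j) z = KV a z - KV b z.
Proof.
rewrite !KVE -sumrB; apply: eq_bigr => j _ /=; by rewrite mulrBr.
Qed.

Lemma KV_sum r (F : 'I_r -> 'I_n -> R) z :
  KV (fun j => \sum_(i < r) F i j) z = \sum_(i < r) KV (F i) z.
Proof.
rewrite KVE; under eq_bigr do rewrite mulr_sumr.
rewrite exchange_big; apply: eq_bigr => i _; by rewrite KVE.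
Qed.

Lemma KV_scale (c : R) (a : 'I_n -> R) z : KV (fun j => c * a j) z = c * KV a z.
Proof.
rewrite !KVE mulr_sumr; apply: eq_bigr => j _; by rewrite mulrCA.
Qed.

Lemma Mcol v j : (Mmat *m \col_j0 v j0) j 0 = lam * v j - KV v (x j).
Proof.
rewrite /Mmat mulmxBl mul_scalar_mx mul_mx_diag !mxE; congr (_ - _).
rewrite KVE; apply: eq_bigr => t _; rewrite !mxE; congr (_ * _).
apply: eq_bigr => l _; rewrite !mxE; ring.
Qed.

Definition hom (v : 'I_n -> R) := forall j, lam * v j - KV v (x j) = 0.

Lemma hom_iff v : hom v <-> (\row_j v j <= kermx Mmat^T)%MS.
Proof.
have E : \row_j v j *m Mmat^T = (Mmat *m \col_j v j)^T.
  rewrite trmx_mul; congr (_ *m _); apply/matrixP => a b; by rewrite !mxE.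
split.
  move=> hv; apply/sub_kermxP; rewrite E.
  suff -> : Mmat *m \col_j v j = 0 by rewrite trmx0.
  apply/colP => j; rewrite Mcol mxE; exact: hv.
move/sub_kermxP; rewrite E => /(congr1 trmx); rewrite trmxK trmx0 => /colP hv j.
by have := hv j; rewrite Mcol mxE.
Qed.

Definition rk := \rank (kermx Mmat^T).
Definition Bm : 'M[R]_(rk, n) := row_base (kermx Mmat^T).

Lemma B_hom i : hom (fun t => Bm i t).
Proof.
apply/hom_iff.
have -> : \row_j Bm i j = row i Bm by apply/matrixP => a b; rewrite !mxE.
apply: submx_trans (row_sub _ _) _; by rewrite eq_row_base.
Qed.

Lemma B_free (c : 'I_rk -> R) : (forall t, \sum_(i < rk) c i * Bm i t = 0) -> forall i, c i = 0.
Proof.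
move=> H.
have : (\row_i c i) *m Bm = 0.
  apply/matrixP => a t; rewrite !mxE; under eq_bigr do rewrite mxE; exact: H t.
move/eqP; rewrite mulmx_free_eq0 ?row_base_free // => /eqP /matrixP hc i.
by have := hc 0 i; rewrite !mxE.
Qed.

Lemma B_span v : hom v -> exists c : 'I_rk -> R, forall t, v t = \sum_(i < rk) c i * Bm i t.
Proof.
move/hom_iff; rewrite -(eq_row_base (kermx Mmat^T)) => /submxP [D hD].
exists (fun i => D 0 i) => t.
move/matrixP: hD => /(_ 0 t); rewrite !mxE => ->; by [].
Qed.
End Alg.
Unset Implicit Arguments.

Theorem proposition3p7 (R : realType) (d : nat) (Omega : set 'rV[R]_d)
  (q : nat) (lam : R) (k : 'rV[R]_d -> 'rV[R]_d -> R) (f : 'rV[R]_d -> R)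
  (n m : nat) (x : 'I_n -> 'rV[R]_d) (y : 'I_m -> 'rV[R]_d)
  (w : 'I_m -> R) (Rm : 'M[R]_(m, n)) :
  open Omega -> bounded_set Omega -> lam != 0 ->
  Cq_on (prodset Omega) q (fun z => k (lsubmx z) (rsubmx z)) ->
  Cq_on Omega q f ->
  injective x -> (forall j, closure Omega (x j)) ->
  injective y -> (forall i, closure Omega (y i)) ->
  let M := lam%:M - kmat k x y *m diag_mx (\row_i w i) *m Rm in
  let fX := \col_j f (x j) in
  let Ssys := [set uh : 'I_n -> R | M *m (\col_j uh j) = fX] in
  let Sop := [set u : 'rV[R]_d -> R | Cq_on Omega q u /\
                 forall z, closure Omega z -> lam * u z - Kh k x y w Rm u z = f z] in
  ((exists uh, Ssys uh) <-> (exists u, Sop u)) /\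
  ((exists uh, Ssys uh) -> (exists u, Sop u) ->
     exists r : nat, affine_dim_on setT Ssys r /\ affine_dim_on (closure Omega) Sop r).
Proof.
move=> Oo _ lam0 HK Hf _ Cx _ Cy M fX Ssys Sop.
have KhE : forall u z, Kh k x y w Rm u z = KV k y w Rm (fun j => u (x j)) z by [].
have Mc : forall v j, (M *m \col_j0 v j0) j 0 = lam * v j - KV k y w Rm v (x j) :=
  Mcol k x y w Rm lam.
have SsysE : forall v, Ssys v <-> forall j, lam * v j - KV k y w Rm v (x j) = f (x j).
  move=> v; rewrite /Ssys /=; split.
    by move/colP => H j; have := H j; rewrite Mc /fX mxE.
  by move=> H; apply/colP => j; rewrite Mc /fX mxE; exact: H j.
have kCq : forall l, Cq_on Omega q (fun z => k z (y l)) := fun l => Cq_slice Oo HK (Cy l).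
have KVCq : forall v, Cq_on Omega q (KV k y w Rm v).
  move=> v.
  apply: (Cq_ext Oo _ (Cq_sum (index_enum 'I_m)
    (F := fun l z => (w l * \sum_(j < n) Rm l j * v j) * k z (y l)) Oo
    (fun l => Cq_scale _ Oo (kCq l)))).
  by move=> z _; rewrite /KV; apply: eq_bigr => l _; ring.
have sol : forall v, Ssys v -> Sop (fun z => lam^-1 * (f z + KV k y w Rm v z)).
  move=> v /SsysE Hv; split.
    by apply: (Cq_scale lam^-1 Oo); apply: (Cq_add Oo Hf (KVCq v)).
  move=> z Cz; rewrite KhE.
  have -> : (fun j => lam^-1 * (f (x j) + KV k y w Rm v (x j))) = v.
    by apply: funext => j; rewrite -(Hv j); field.
  by field.
have sys : forall u, Sop u -> Ssys (fun j => u (x j)).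
  by move=> u [_ Hu]; apply/SsysE => j; have := Hu _ (Cx j); rewrite KhE.
split.
  by split => [[uh /sol Su] | [u /sys Su]]; eexists; exact: Su.
move=> [uh0 S0] [u0 Su0].
have homB : forall a b : 'I_n -> R, Ssys a -> Ssys b ->
    hom k x y w Rm lam (fun j => a j - b j).
  move=> a b /SsysE Ha /SsysE Hb j; rewrite KV_sub mulrBr.
  have := Ha j; have := Hb j; lra.
have Bh : forall i j, KV k y w Rm (fun t => Bm k x y w Rm lam i t) (x j)
    = lam * Bm k x y w Rm lam i j.
  move=> i j; have := B_hom i j; lra.
have KVc : forall (a : 'I_n -> R) (c : 'I_(rk k x y w Rm lam) -> R) z,
    KV k y w Rm (fun j => a j + \sum_(i < rk k x y w Rm lam) c i * Bm k x y w Rm lam i j) z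
    = KV k y w Rm a z + \sum_(i < rk k x y w Rm lam) c i * KV k y w Rm (fun t => Bm k x y w Rm lam i t) z.
  move=> a c z; rewrite KV_add KV_sum; congr (_ + _).
  by apply: eq_bigr => i _; rewrite KV_scale.
exists (rk k x y w Rm lam); split.
- exists uh0, (fun i t => Bm k x y w Rm lam i t); split.
    by move=> c Hc; apply: B_free => t; exact: Hc t I.
  move=> v; split.
    move=> Sv; have [c Hc] := B_span (homB _ _ Sv S0).
    by exists c => t _ /=; rewrite -Hc; ring.
  move=> [c Hc].
  have -> : v = fun t => uh0 t + \sum_(i < rk k x y w Rm lam) c i * Bm k x y w Rm lam i t.
    by apply: funext => t; exact: Hc t I.
  apply/SsysE => j; have /SsysE H0 := S0; rewrite KVc.
  have -> : \sum_(i < rk k x y w Rm lam) c i * KV k y w Rm (fun t => Bm k x y w Rm lam i t) (x j)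
      = lam * \sum_(i < rk k x y w Rm lam) c i * Bm k x y w Rm lam i j.
    by rewrite mulr_sumr; apply: eq_bigr => i _; rewrite Bh mulrCA.
  rewrite -(H0 j); ring.
- pose b := fun (i : 'I_(rk k x y w Rm lam)) z =>
    lam^-1 * KV k y w Rm (fun t => Bm k x y w Rm lam i t) z.
  have bx : forall i j, b i (x j) = Bm k x y w Rm lam i j.
    by move=> i j; rewrite /b Bh mulrA mulVf // mul1r.
  have bsum : forall (c : 'I_(rk k x y w Rm lam) -> R) z,
      \sum_(i < rk k x y w Rm lam) c i * b i z =
      lam^-1 * \sum_(i < rk k x y w Rm lam) c i * KV k y w Rm (fun t => Bm k x y w Rm lam i t) z.
    by move=> c z; rewrite mulr_sumr; apply: eq_bigr => i _; rewrite /b mulrCA.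
  exists u0, b; split.
    move=> c Hc; apply: B_free => t; have := Hc (x t) (Cx t).
    by under eq_bigr do rewrite bx.
  move=> v; split.
    move=> Sv; have [c Hc] := B_span (homB _ _ (sys v Sv) (sys u0 Su0)).
    exists c => z Cz.
    have ev := Sv.2 z Cz; have e0 := Su0.2 z Cz; rewrite KhE in ev; rewrite KhE in e0.
    have E : (fun j => v (x j)) = fun j => u0 (x j) +
        \sum_(i < rk k x y w Rm lam) c i * Bm k x y w Rm lam i j.
      by apply: funext => j; rewrite -Hc; ring.
    rewrite E KVc in ev; rewrite bsum.
    apply: (mulfI lam0); rewrite mulrDr mulrA mulfV // mul1r; lra.
  move=> [c Hc]; split.
    apply: (Cq_ext Oo (fun z Cz => esym (Hc z Cz))).
    apply: (Cq_add Oo Su0.1).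
    apply: (Cq_ext Oo _ (Cq_sum (index_enum _) (F := fun i z => c i * b i z) Oo
      (fun i => Cq_scale (c i) Oo (Cq_scale lam^-1 Oo (KVCq _))))).
    by [].
  move=> z Cz; rewrite KhE.
  have E : (fun j => v (x j)) = fun j => u0 (x j) +
      \sum_(i < rk k x y w Rm lam) c i * Bm k x y w Rm lam i j.
    apply: funext => j; rewrite Hc //; congr (_ + _).
    by apply: eq_bigr => i _; rewrite bx.
  rewrite E KVc Hc // bsum.
  have e0 := Su0.2 z Cz; rewrite KhE in e0; rewrite -e0.
  by field.
Qed.
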